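(* Let $n$ be a positive integer. Every eigenvalue of the Fibonacci--Redheffer matrix $F_R(n)$ has geometric multiplicity $1$.
   Context: The Fibonacci numbers are $F_1=F_2=1$, $F_n=F_{n-1}+F_{n-2}$ for $n\ge 3$. The Fibonacci--Redheffer matrix $F_R(n)=[F_R(i,j)]_{i,j=1}^n$ is defined by $F_R(i,j)=1$ if $j=1$; $F_R(i,j)=F_i$ if $i\mid j$; and $F_R(i,j)=0$ otherwise. The geometric multiplicity of an eigenvalue $\lambda$ is the dimension of the null space of $F_R(n)-\lambda I_n$. *)

(* Defs.v *)
From HB Require Import structures.
From mathcomp Require Import all_boot all_order all_algebra all_field.
Set Implicit Arguments. Unset Strict Implicit. Unset Printing Implicit Defensive.
Import GRing.Theory Num.Theory.
Local Open Scope ring_scope.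

Fixpoint fib (k : nat) : nat :=
  match k with
  | 0 => 0
  | 1 => 1
  | (k'.+1 as k1).+1 => fib k1 + fib k'
  end.

(* Fibonacci--Redheffer matrix F_R(n) over the algebraic complex numbers.
   Index i : 'I_n stands for the paper's row index i+1 (1-based). *)
Definition fib_redheffer (n : nat) : 'M[algC]_n :=
  \matrix_(i < n, j < n)
    if (j.+1 == 1)%N then 1
    else if (i.+1 %| j.+1)%N then (fib i.+1)%:R
    else 0.

(* Main.v *)
Require Import Defs.
From mathcomp Require Import all_boot all_order all_algebra all_field.
Import Order.TTheory GRing.Theory Num.Theory.
Local Open Scope ring_scope.

Lemma fib_pos k : (0 < fib k.+1)%N.
Proof.
elim/ltn_ind: k => -[|[|k]] IH //.
have -> : fib k.+3 = (fib k.+2 + fib k.+1)%N by [].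
by rewrite addn_gt0 IH.
Qed.

Lemma fib_step a : (2 <= a)%N -> (fib a < fib a.+1)%N.
Proof.
case: a => [|[|a]] // _.
have -> : fib a.+3 = (fib a.+2 + fib a.+1)%N by [].
by rewrite -[X in (X < _)%N]addn0 ltn_add2l fib_pos.
Qed.

Lemma fib_lt a b : (2 <= a)%N -> (a < b)%N -> (fib a < fib b)%N.
Proof.
move=> ha; elim: b => // b IH; rewrite ltnS leq_eqVlt => /orP[/eqP<-|hab].
  exact: fib_step.
apply: (ltn_trans (IH hab)); apply: fib_step; apply: leq_trans ha (ltnW hab).
Qed.

Lemma fib_inj a b : (2 <= a)%N -> (2 <= b)%N -> fib a = fib b -> a = b.
Proof.
move=> ha hb e; case: (ltngtP a b) => // h.
  by move: (fib_lt _ _ ha h); rewrite e ltnn.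
by move: (fib_lt _ _ hb h); rewrite e ltnn.
Qed.
Arguments fib : simpl never.
Lemma colEq n (lambda : algC) (u : 'rV_n) (j : 'I_n) : (0 < j)%N ->
  u *m (fib_redheffer n - lambda%:M) = 0 ->
  (lambda - (fib j.+1)%:R) * u 0 j =
  \sum_(i < n | (i.+1 %| j.+1)%N && (i != j)) (fib i.+1)%:R * u 0 i.
Proof.
move=> j0 /rowP/(_ j); rewrite !mxE.
under eq_bigr => i _ do rewrite !mxE.
have -> : (j.+1 == 1)%N = false by case: (nat_of_ord j) j0.
under eq_bigr => i _ do rewrite mulrBr.
have hs : \sum_i u 0 i * (lambda *+ (i == j)) = u 0 j * lambda.
  rewrite (bigD1 j) //= eqxx big1 => [|i /negbTE -> ]; last by rewrite mulr0.
  by rewrite addr0 mulr1n.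
rewrite sumrB hs (bigD1 j) //= dvdnn.
rewrite big_mkcond /=.
move/eqP; rewrite subr_eq0 => /eqP e.
rewrite mulrBl (mulrC lambda) -e mulrC addrAC subrr add0r.
rewrite [RHS]big_mkcond /=; apply: eq_bigr => i _.
by case: (i != j); case: (i.+1 %| j.+1)%N; rewrite /= ?mulr0 // mulrC.
Qed.
Arguments colEq {n lambda u j}.

Lemma lt_of_div n (i j : 'I_n) : ((i.+1 %| j.+1)%N && (i != j)) -> (i < j)%N.
Proof.
case/andP => /(dvdn_leq (ltn0Sn _)) h ne.
by rewrite ltn_neqAle -ltnS h andbT.
Qed.

Lemma kill n (lambda : algC) (u : 'rV_n) (k : nat) :
  u *m (fib_redheffer n - lambda%:M) = 0 ->
  (forall j : 'I_n, nat_of_ord j = 0%N \/ nat_of_ord j = k -> u 0 j = 0) ->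
  (forall j : 'I_n, (0 < j)%N -> nat_of_ord j <> k -> (fib j.+1)%:R != lambda) ->
  u = 0.
Proof.
move=> hu h0 hF.
suff H : forall m (j : 'I_n), nat_of_ord j = m -> u 0 j = 0.
  by apply/rowP => j; rewrite mxE (H j) // (ord1 _).
elim/ltn_ind => m IH j ej.
case: (eqVneq (nat_of_ord j) 0%N) => [e|nz]; first by apply: h0; left.
case: (eqVneq (nat_of_ord j) k) => [e|nk]; first by apply: h0; right.
have j0 : (0 < j)%N by rewrite lt0n.
have := colEq j0 hu.
rewrite big1 => [|i hi]; last first.
  by rewrite (IH i) ?mulr0 // -ej; apply: lt_of_div.
move/eqP; rewrite mulf_eq0 subr_eq0 eq_sym (negbTE (hF j j0 (fun e => (negP nk) (introT eqP e)))) /=.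
by move/eqP.
Qed.

Lemma u0_zero n (lambda : algC) (u : 'rV_n) (k : 'I_n) :
  (0 < k)%N -> lambda = (fib k.+1)%:R ->
  u *m (fib_redheffer n - lambda%:M) = 0 ->
  forall i0 : 'I_n, nat_of_ord i0 = 0%N -> u 0 i0 = 0.
Proof.
move=> k0 el hu i0 ei0.
case: (eqVneq (u 0 i0) 0) => // nz.
pose w := (u 0 i0)^-1 *: u.
have hw : w *m (fib_redheffer n - lambda%:M) = 0 by rewrite -scalemxAl hu scaler0.
have w0 : w 0 i0 = 1 by rewrite mxE mulVf.
have posS : forall j : 'I_n, (0 < j)%N -> (forall i : 'I_n, (i < j)%N -> 0 < w 0 i) ->
    0 < \sum_(i < n | (i.+1 %| j.+1)%N && (i != j)) (fib i.+1)%:R * w 0 i.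
  move=> j j0 hpos.
  have hi0 : (i0.+1 %| j.+1)%N && (i0 != j).
    rewrite ei0 dvd1n /=; apply/eqP => e; move: j0; by rewrite -e ei0.
  rewrite (bigD1 i0 hi0) /= ei0 w0 mulr1.
  apply: ltr_wpDr; last by rewrite ltr0n fib_pos.
  apply: sumr_ge0 => i /andP[hi _]; apply: mulr_ge0 => //.
  exact/ltW/hpos/lt_of_div.
have pos : forall m (j : 'I_n), nat_of_ord j = m -> (m < k)%N -> 0 < w 0 j.
  elim/ltn_ind => m IH j ej mk.
  case: (eqVneq (nat_of_ord j) 0%N) => [e|nz0].
    by rewrite (_ : j = i0) ?w0 ?ltr01 //; apply: val_inj; rewrite /= e ei0.
  have j0 : (0 < j)%N by rewrite lt0n.
  have := colEq j0 hw.
  have hc : 0 < lambda - (fib j.+1)%:R.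
    rewrite el subr_gt0 ltr_nat; apply: fib_lt; first by rewrite ltnS.
    by rewrite ltnS ej.
  move=> e; rewrite -(pmulr_rgt0 _ hc) e; apply: posS => // i hi.
  have im : (i < m)%N by rewrite -ej.
  by apply: (IH i im) => //; exact: ltn_trans im mk.
have := colEq k0 hw; rewrite el subrr mul0r => e.
have := posS k k0 (fun i hi => pos i i erefl hi).
by rewrite -e ltxx.
Qed.

Lemma rank_le1 n (B : 'M[algC]_n) (p : 'I_n) :
  (forall u : 'rV_n, u *m B = 0 -> u 0 p = 0 -> u = 0) ->
  (\rank (kermx B) <= 1)%N.
Proof.
move=> hp.
rewrite -(mxrank_mul_ker (kermx B) (delta_mx p (0 : 'I_1))).
have -> : \rank (kermx B :&: kermx (delta_mx p (0 : 'I_1)))%MS = 0%N.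
  apply/eqP; rewrite mxrank_eq0; apply/eqP/row_matrixP => i; rewrite row0.
  set S := (_ :&: _)%MS.
  have hS : (row i S <= S)%MS by exact: row_sub.
  apply: hp.
    apply/sub_kermxP; exact: submx_trans hS (capmxSl _ _).
  have /sub_kermxP := submx_trans hS (capmxSr _ _).
  rewrite -colE => /matrixP/(_ 0 0); by rewrite !mxE.
by rewrite addn0 rank_leq_col.
Qed.

Theorem lemma3 (n : nat) (hn : (0 < n)%N) (lambda : algC) :
  eigenvalue (fib_redheffer n) lambda ->
  \rank (eigenspace (fib_redheffer n) lambda) = 1%N.
Proof.
move=> ev; apply/eqP; rewrite eqn_leq lt0n mxrank_eq0 andbC; apply/andP; split; first exact: ev.
rewrite /eigenspace.
case: (boolP [exists k : 'I_n, (0 < k)%N && (lambda == (fib k.+1)%:R)]).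
  case/existsP => k /andP[k0 /eqP el].
  apply: (@rank_le1 _ _ k) => u hu uk.
  apply: (@kill _ _ _ k hu).
    move=> j [] e; last by rewrite (_ : j = k) //; apply: val_inj.
    exact: (@u0_zero _ _ _ k k0 el hu).
  move=> j j0 jk; rewrite el eqr_nat; apply/eqP => /(fib_inj _ _ _ _) e.
  by apply: jk; apply/eqP; rewrite -eqSS e // ltnS.
move=> hne.
apply: (@rank_le1 _ _ (Ordinal hn)) => u hu u0.
apply: (@kill _ _ _ 0%N hu).
  move=> j [] e; by rewrite (_ : j = Ordinal hn) //; apply: val_inj.
move=> j j0 _; apply/eqP => e; move/negP: hne; apply; apply/existsP; exists j.
by rewrite j0 e eqxx.
Qed.
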